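(* Let $D$ be a Lagrangian diagram obtained by applying Ng's resolution to a front diagram of a Legendrian knot. Then the flooding algorithm applied to the area inequalities of $D$ succeeds, i.e. it assigns every crossing of $D$ to a tier.
   Context: Front diagram: projection $(x,y,z)\mapsto(x,z)$ of a Legendrian knot in $(\mathbb{R}^3,dz-y\,dx)$. Ng's resolution (Ng, ''Computable Legendrian invariants'') converts a front diagram into a Lagrangian diagram of a Legendrian isotopic knot, each front crossing becoming a crossing and each right cusp becoming a crossing bounding a small loop. For a Lagrangian diagram, an area patch is a bounded complementary region; traversing its boundary with the boundary orientation, a corner where one passes from an understrand to an overstrand has positive Reeb sign, otherwise negative. The area inequality of a patch says the Reeb-sign-weighted sum of the heights $h(q)$ of its corners is $>0$; the collection of these is $\mathcal{R}$, with $f_i:\sum_j\alpha_{i,j}h(q_j)>0$. Flooding algorithm: start with $\mathcal{R}'=\mathcal{R}$, $k=1$. (i) Let $T_k$ be the set of not-yet-assigned crossings $q_j$ with $\alpha_{i,j}\ge0$ for all $f_i\in\mathcal{R}'$. (ii) If $T_k=\emptyset$, the algorithm fails; otherwise remove from $\mathcal{R}'$ every $f_i$ having $\alpha_{i,j}>0$ for some $q_j\in T_k$. (iii) If $\mathcal{R}'\neq\emptyset$ increase $k$ and repeat; if $\mathcal{R}'=\emptyset$, put all remaining crossings in a final tier $T_{k+1}$ and the algorithm succeeds. *)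

(* Defs.v *)
From Stdlib Require Import List Arith ZArith Relations ClassicalEpsilon.
Import ListNotations.

(* Front diagrams, read from left to right (increasing x).  Between two
   consecutive events there are n strands, numbered 0..n-1 from bottom to top
   (increasing z).  Events (at pairwise distinct x-coordinates):
   - LCusp i : a left cusp creating two new strands at positions i, i+1
               (requires i <= n);
   - Cross i : strands i and i+1 cross (requires i+1 < n);
   - RCusp i : strands i and i+1 end in a right cusp (requires i+1 < n).     *)
Inductive event : Type := LCusp (i : nat) | Cross (i : nat) | RCusp (i : nat).
Definition front := list event.

Definition step_count (n : nat) (e : event) : nat :=
  match e with LCusp _ => n + 2 | Cross _ => n | RCusp _ => n - 2 end.

Definition event_ok (n : nat) (e : event) : Prop :=
  match e with
  | LCusp i => i <= n
  | Cross i => i + 1 < n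
  | RCusp i => i + 1 < n
  end.

Fixpoint valid_from (n : nat) (f : front) : Prop :=
  match f with
  | [] => n = 0
  | e :: f' => event_ok n e /\ valid_from (step_count n e) f'
  end.

Definition valid_front (f : front) : Prop := valid_from 0 f.

Definition nstr (f : front) (s : nat) : nat := fold_left step_count (firstn s f) 0.

Definition ev (f : front) (s : nat) : option event := nth_error f s.

(* Strand pieces (s, p): strand p of slice s.  Connectivity of the front.    *)
Definition strand_node (f : front) (a : nat * nat) : Prop :=
  fst a <= length f /\ snd a < nstr f (fst a).

Definition strand_edge (f : front) (a b : nat * nat) : Prop :=
  exists s e, ev f s = Some e /\
  match e with
  | LCusp i =>
      (a = (s + 1, i) /\ b = (s + 1, i + 1))
      \/ (exists p, p < i /\ a = (s, p) /\ b = (s + 1, p))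
      \/ (exists p, i <= p < nstr f s /\ a = (s, p) /\ b = (s + 1, p + 2))
  | Cross i =>
      (a = (s, i) /\ b = (s + 1, i + 1))
      \/ (a = (s, i + 1) /\ b = (s + 1, i))
      \/ (exists p, p < nstr f s /\ p <> i /\ p <> i + 1 /\ a = (s, p) /\ b = (s + 1, p))
  | RCusp i =>
      (a = (s, i) /\ b = (s, i + 1))
      \/ (exists p, p < i /\ a = (s, p) /\ b = (s + 1, p))
      \/ (exists p, i + 2 <= p < nstr f s /\ a = (s, p) /\ b = (s + 1, p - 2))
  end.

(* f is a (generic) front diagram of a Legendrian KNOT: one component. *)
Definition knot_front (f : front) : Prop :=
  valid_front f /\
  (exists a, strand_node f a) /\
  (forall a b, strand_node f a -> strand_node f b ->
     clos_refl_sym_trans _ (strand_edge f) a b).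

(* Gap (s, g), g <= nstr f s, is the part of slice s
   between strand g-1 and strand g (gap 0 below everything, gap (nstr f s)
   above everything).  Gaps 0 and (nstr f s) of a slice lie in the unbounded
   region, which also connects them.                                         *)
Definition gap_node (f : front) (a : nat * nat) : Prop :=
  fst a <= length f /\ snd a <= nstr f (fst a).

Definition gap_edge (f : front) (a b : nat * nat) : Prop :=
  (exists s, s <= length f /\ a = (s, 0) /\ b = (s, nstr f s))
  \/
  (exists s e, ev f s = Some e /\
   match e with
   | LCusp i => exists g, g <= nstr f s /\
        ((g <= i /\ a = (s, g) /\ b = (s + 1, g)) \/
         (i <= g /\ a = (s, g) /\ b = (s + 1, g + 2)))
   | Cross i => exists g, g <= nstr f s /\ g <> i + 1 /\
        a = (s, g) /\ b = (s + 1, g)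
   | RCusp i => exists g, g <= nstr f s /\
        ((g <= i /\ a = (s, g) /\ b = (s + 1, g)) \/
         (i + 2 <= g /\ a = (s, g) /\ b = (s + 1, g - 2)))
   end).

Definition same_region (f : front) (a b : nat * nat) : Prop :=
  clos_refl_sym_trans _ (gap_edge f) a b.

(* The Lagrangian diagram D obtained by Ng's resolution of f: it is planar
   isotopic to f with left cusps smoothed, each front crossing kept as a
   crossing (the strand of smaller front slope, i.e. the one descending from
   upper-left to lower-right, is the overstrand) and each right cusp replaced
   by a crossing followed by a small loop (the upper strand is the overstrand).
   Its crossings are indexed by the positions q of Cross/RCusp events.
   Its complementary regions are the regions of the front complement (gap
   components) plus, for each right cusp, the interior of its small loop.    *)
Inductive rkey : Type := GapK (s g : nat) | LoopK (s : nat).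

Definition is_crossing (f : front) (q : nat) : Prop :=
  exists i, ev f q = Some (Cross i) \/ ev f q = Some (RCusp i).

(* area patches = bounded complementary regions (given by a representative) *)
Definition is_patch (f : front) (k : rkey) : Prop :=
  match k with
  | GapK s g => gap_node f (s, g) /\ ~ same_region f (s, g) (0, 0)
  | LoopK s => exists i, ev f s = Some (RCusp i)
  end.

Definition same_patch (f : front) (k k' : rkey) : Prop :=
  match k, k' with
  | GapK s g, GapK s' g' => same_region f (s, g) (s', g')
  | LoopK s, LoopK s' => s = s'
  | _, _ => False
  end.

(* The four quadrants (corners) at crossing q, with their Reeb signs
   (boundary oriented counterclockwise; +1 when passing from under- to
   overstrand).  Quadrants: left, right, below, above. *)
Definition corners (f : front) (q : nat) : list (rkey * Z) :=
  match ev f q with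
  | Some (Cross i) =>
      [(GapK q (i + 1), 1%Z); (GapK (q + 1) (i + 1), 1%Z);
       (GapK q i, (-1)%Z); (GapK q (i + 2), (-1)%Z)]
  | Some (RCusp i) =>
      [(GapK q (i + 1), 1%Z); (LoopK q, 1%Z);
       (GapK q i, (-1)%Z); (GapK q (i + 2), (-1)%Z)]
  | _ => []
  end.

(* alpha f k q : coefficient of h(q) in the area inequality of patch k
   (Reeb-sign-weighted count of the corners of the patch at q). *)
Definition alpha (f : front) (k : rkey) (q : nat) : Z :=
  fold_right
    (fun c acc =>
       ((if excluded_middle_informative (same_patch f k (fst c)) then snd c else 0)
        + acc)%Z)
    0%Z (corners f q).

(* The flooding algorithm.  State: R' (predicate on patch representatives)
   and the set A of already assigned crossings.                             *)
Definition tier_cand (f : front) (Rp : rkey -> Prop) (A : nat -> Prop) (q : nat) : Prop :=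
  is_crossing f q /\ ~ A q /\ (forall k, Rp k -> (0 <= alpha f k q)%Z).

Definition flood_remove (f : front) (Rp : rkey -> Prop) (A : nat -> Prop) : rkey -> Prop :=
  fun k => Rp k /\ ~ (exists q, tier_cand f Rp A q /\ (0 < alpha f k q)%Z).

Definition flood_assign (f : front) (Rp : rkey -> Prop) (A : nat -> Prop) : nat -> Prop :=
  fun q => A q \/ tier_cand f Rp A q.

(* flood_succeeds f Rp A : the algorithm, run from state (Rp, A), succeeds.
   (It fails exactly when some T_k is empty; no derivation exists then.) *)
Inductive flood_succeeds (f : front) : (rkey -> Prop) -> (nat -> Prop) -> Prop :=
| flood_last Rp A :
    (exists q, tier_cand f Rp A q) ->
    (forall k, ~ flood_remove f Rp A k) ->
    flood_succeeds f Rp A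
| flood_next Rp A :
    (exists q, tier_cand f Rp A q) ->
    (exists k, flood_remove f Rp A k) ->
    flood_succeeds f (flood_remove f Rp A) (flood_assign f Rp A) ->
    flood_succeeds f Rp A.

Definition flooding_succeeds (f : front) : Prop :=
  flood_succeeds f (is_patch f) (fun _ => False).

(* Main.v *)
Require Import Defs.
From Stdlib Require Import List Arith ZArith Relations ClassicalEpsilon Classical Lia.
Import ListNotations.

Lemma firstn_snoc {A} (l : list A) s e :
  nth_error l s = Some e -> firstn (S s) l = firstn s l ++ [e].
Proof.
  revert s; induction l as [|x l IH]; intros [|s] H; simpl in *; try discriminate.
  - injection H; intros ->; reflexivity.
  - rewrite (IH s H). reflexivity.
Qed.

Lemma skipn_nth {A} (l : list A) s e :
  nth_error l s = Some e -> skipn s l = e :: skipn (S s) l.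
Proof.
  revert s; induction l as [|x l IH]; intros [|s] H; simpl in *; try discriminate.
  - injection H; intros ->; reflexivity.
  - apply IH; exact H.
Qed.

Lemma nstr_S f s e : ev f s = Some e -> nstr f (s + 1) = step_count (nstr f s) e.
Proof.
  intro H. unfold nstr, ev in *. rewrite Nat.add_1_r, (firstn_snoc _ _ _ H), fold_left_app.
  reflexivity.
Qed.

Lemma valid_gen : forall f n, valid_from n f -> forall s, s <= length f ->
  valid_from (fold_left step_count (firstn s f) n) (skipn s f).
Proof.
  induction f as [|e f IH]; intros n H [|s] Hs; simpl in *; auto; try lia.
  destruct H as [_ H]. apply IH; auto; lia.
Qed.

Lemma valid_ev f s e : valid_front f -> ev f s = Some e -> event_ok (nstr f s) e.
Proof.
  intros Hv H. assert (s < length f).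
  { apply nth_error_Some. unfold ev in H. rewrite H. discriminate. }
  pose proof (valid_gen f 0 Hv s ltac:(lia)) as V.
  unfold ev in H. rewrite (skipn_nth _ _ _ H) in V. destruct V as [V _]. exact V.
Qed.

Lemma valid_end f : valid_front f -> nstr f (length f) = 0.
Proof.
  intros Hv. pose proof (valid_gen f 0 Hv (length f) ltac:(lia)) as V.
  rewrite skipn_all in V. exact V.
Qed.

Lemma ev_some f s : s < length f -> exists e, ev f s = Some e.
Proof.
  intro H. unfold ev. destruct (nth_error f s) eqn:E; eauto.
  apply nth_error_None in E. lia.
Qed.

Lemma bottom f : forall t, t <= length f -> same_region f (t, 0) (0, 0).
Proof.
  induction t; intros Ht.
  - apply rst_refl.
  - destruct (ev_some f t ltac:(lia)) as [e He].
    assert (E : gap_edge f (t, 0) (t + 1, 0)).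
    { right. exists t, e. split; [exact He|].
      destruct e; exists 0; split; try lia; try (left; repeat split; auto; lia); repeat split; auto; lia. }
    replace (S t) with (t + 1) by lia.
    eapply rst_trans; [apply rst_sym, rst_step, E | apply IHt; lia].
Qed.

Lemma top f t : t <= length f -> same_region f (t, nstr f t) (0, 0).
Proof.
  intros Ht. eapply rst_trans; [| apply bottom, Ht].
  apply rst_sym, rst_step. left. exists t. auto.
Qed.

Lemma alpha_nonneg f k q i :
  (ev f q = Some (Cross i) \/ ev f q = Some (RCusp i)) ->
  ~ same_patch f k (GapK q i) -> ~ same_patch f k (GapK q (i + 2)) ->
  (0 <= alpha f k q)%Z /\ (same_patch f k (GapK q (i + 1)) -> (0 < alpha f k q)%Z).
Proof.
  intros [H|H] n1 n2; unfold alpha, corners; rewrite H; cbn [fold_right fst snd];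
  repeat destruct (excluded_middle_informative _); try contradiction;
  split; intros; try lia; contradiction.
Qed.

Lemma alpha_loop f s i : ev f s = Some (RCusp i) -> alpha f (LoopK s) s = 1%Z.
Proof.
  intros H; unfold alpha, corners; rewrite H; cbn [fold_right fst snd same_patch];
  repeat destruct (excluded_middle_informative _); try contradiction; try lia.
Qed.

Lemma ext_neg f s0 g0 q i : valid_front f ->
  (ev f q = Some (Cross i) \/ ev f q = Some (RCusp i)) ->
  same_region f (s0, g0) (q, i) \/ same_region f (s0, g0) (q, i + 2) ->
  exists g', g' <= nstr f (q + 1) /\ same_region f (s0, g0) (q + 1, g').
Proof.
  intros Hv Hq Hs.
  destruct Hq as [Hq|Hq]; pose proof (valid_ev f q _ Hv Hq) as ok;
    pose proof (nstr_S f q _ Hq) as ns; simpl in ok, ns.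
  - destruct Hs as [Hs|Hs].
    + exists i. split; [lia|]. eapply rst_trans; [exact Hs|]. apply rst_step.
      right. exists q, (Cross i). split; [exact Hq|]. exists i; repeat split; auto; lia.
    + exists (i + 2). split; [lia|]. eapply rst_trans; [exact Hs|]. apply rst_step.
      right. exists q, (Cross i). split; [exact Hq|]. exists (i + 2); repeat split; auto; lia.
  - exists i. split; [lia|]. destruct Hs as [Hs|Hs]; eapply rst_trans; try exact Hs; apply rst_step;
      right; exists q, (RCusp i); (split; [exact Hq|]).
    + exists i; split; [lia|]; left; repeat split; auto.
    + exists (i + 2); split; [lia|]; right; repeat split; auto.
      f_equal; lia.
Qed.

Lemma walk f s0 g0 (Hv : valid_front f) (Hb : ~ same_region f (s0, g0) (0, 0)) :
  forall m s g, length f - s = m -> gap_node f (s, g) -> same_region f (s0, g0) (s, g) ->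
  exists r, s <= r /\ is_crossing f r /\ (0 < alpha f (GapK s0 g0) r)%Z.
Proof.
  intro m; induction m as [m IH] using lt_wf_ind; intros s g Hm [Hs Hg] Hr; simpl in Hs, Hg.
  destruct (Nat.eq_dec s (length f)) as [Hl|Hl].
  - subst s. rewrite valid_end in Hg by exact Hv. assert (g = 0) by lia. subst g.
    exfalso. apply Hb. eapply rst_trans; [exact Hr| apply bottom; lia].
  - destruct (ev_some f s ltac:(lia)) as [e He].
    pose proof (valid_ev f s _ Hv He) as ok. pose proof (nstr_S f s _ He) as ns.
    assert (go : forall g', g' <= nstr f (s + 1) -> same_region f (s0, g0) (s + 1, g') ->
      exists r, s <= r /\ is_crossing f r /\ (0 < alpha f (GapK s0 g0) r)%Z).
    { intros g' H1 H2. destruct (IH (length f - (s + 1)) ltac:(lia) (s + 1) g' eq_refl)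
        as [r [R1 R2]]; [split; simpl; auto; lia | exact H2 |].
      exists r; split; [lia | exact R2]. }
    assert (stepE : forall g', g' <= nstr f (s + 1) -> gap_edge f (s, g) (s + 1, g') ->
      exists r, s <= r /\ is_crossing f r /\ (0 < alpha f (GapK s0 g0) r)%Z).
    { intros g' H1 H2. apply (go g' H1). eapply rst_trans; [exact Hr | apply rst_step, H2]. }
    assert (fin : forall i, (ev f s = Some (Cross i) \/ ev f s = Some (RCusp i)) -> g = i + 1 ->
      exists r, s <= r /\ is_crossing f r /\ (0 < alpha f (GapK s0 g0) r)%Z).
    { intros i Hi Hgi. subst g.
      destruct (classic (same_region f (s0, g0) (s, i) \/ same_region f (s0, g0) (s, i + 2))) as [Hn|Hn].
      - destruct (ext_neg f s0 g0 s i Hv Hi Hn) as [g' [G1 G2]]. exact (go g' G1 G2).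
      - exists s. split; [lia|]. split; [exists i; exact Hi|].
        apply (alpha_nonneg f (GapK s0 g0) s i Hi); simpl; tauto. }
    destruct e as [i|i|i]; simpl in ok, ns.
    + destruct (le_lt_dec g i).
      * apply (stepE g); [lia|]. right. exists s, (LCusp i). split; [exact He|].
        exists g; split; [lia|]; left; repeat split; auto.
      * apply (stepE (g + 2)); [lia|]. right. exists s, (LCusp i). split; [exact He|].
        exists g; split; [lia|]; right; repeat split; auto; lia.
    + destruct (Nat.eq_dec g (i + 1)).
      * apply (fin i); auto.
      * apply (stepE g); [lia|]. right. exists s, (Cross i). split; [exact He|].
        exists g; repeat split; auto; lia.
    + destruct (le_lt_dec g i).
      * apply (stepE g); [lia|]. right. exists s, (RCusp i). split; [exact He|].
        exists g; split; [lia|]; left; repeat split; auto.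
      * destruct (Nat.eq_dec g (i + 1)); [apply (fin i); auto|].
        apply (stepE (g - 2)); [lia|]. right. exists s, (RCusp i). split; [exact He|].
        exists g; split; [lia|]; right; repeat split; auto; lia.
Qed.

Lemma crossing_lt f q : is_crossing f q -> q < length f.
Proof.
  intros [i Hi]. apply nth_error_Some. unfold ev in Hi. destruct Hi as [H|H]; rewrite H; discriminate.
Qed.

Lemma patch_has_pos f k : valid_front f -> is_patch f k ->
  exists r, is_crossing f r /\ (0 < alpha f k r)%Z.
Proof.
  intros Hv. destruct k as [s0 g0|s].
  - intros [Hn Hb]. destruct (walk f s0 g0 Hv Hb _ s0 g0 eq_refl Hn (rst_refl _ _ _))
      as [r [_ R]]. exists r; exact R.
  - intros [i Hi]. exists s. split; [exists i; right; exact Hi|].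
    rewrite (alpha_loop f s i Hi). lia.
Qed.

Lemma cand_lemma f k q : valid_front f -> is_patch f k -> is_crossing f q ->
  (alpha f k q < 0)%Z -> exists r, q < r /\ is_crossing f r /\ (0 < alpha f k r)%Z.
Proof.
  intros Hv Hk [i Hq] Ha.
  destruct (classic (same_patch f k (GapK q i) \/ same_patch f k (GapK q (i + 2)))) as [Hs|Hs].
  - destruct k as [s0 g0|s]; [|simpl in Hs; tauto].
    destruct Hk as [Hn Hb].
    destruct (ext_neg f s0 g0 q i Hv Hq Hs) as [g' [G1 G2]].
    destruct (walk f s0 g0 Hv Hb _ (q + 1) g' eq_refl) as [r [R1 R2]];
      [split; simpl; auto; pose proof (crossing_lt f q (ex_intro _ i Hq)); lia | exact G2 |].
    exists r; split; [lia | exact R2].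
  - exfalso. destruct (alpha_nonneg f k q i Hq) as [H _]; try tauto. lia.
Qed.

Lemma exists_max (P : nat -> Prop) B : (exists q, P q) -> (forall q, P q -> q < B) ->
  exists q, P q /\ forall q', P q' -> q' <= q.
Proof.
  intros [q Hq] HB.
  assert (G : forall m q, P q -> B - q = m -> exists q, P q /\ forall q', P q' -> q' <= q).
  { intro m; induction m as [m IH] using lt_wf_ind; intros q0 Hq0 Hm.
    destruct (classic (exists q', P q' /\ q0 < q')) as [[q' [H1 H2]]|Hn].
    - apply (IH (B - q')) with q'; auto. pose proof (HB q' H1). lia.
    - exists q0; split; auto. intros q' Hq'. destruct (le_lt_dec q' q0); auto.
      exfalso; apply Hn; eauto. }
  eapply G; eauto.
Qed.

Definition Inv f (Rp : rkey -> Prop) (A : nat -> Prop) : Prop :=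
  (forall k, Rp k -> is_patch f k) /\ (forall q k, A q -> Rp k -> (alpha f k q <= 0)%Z).

Lemma main_ind f (Hv : valid_front f) : forall n L Rp A, length L <= n ->
  (forall q, is_crossing f q -> ~ A q -> In q L) -> Inv f Rp A ->
  (exists q, is_crossing f q /\ ~ A q) -> flood_succeeds f Rp A.
Proof.
  induction n as [|n IHn]; intros L Rp A Hlen Hcov [Hpat Hneg] Hex.
  - destruct Hex as [q [H1 H2]]. pose proof (Hcov q H1 H2). destruct L; simpl in *; [contradiction|lia].
  - destruct (exists_max (fun q => is_crossing f q /\ ~ A q) (length f) Hex)
      as [q0 [[Hc0 Ha0] Hmax]]; [intros q [H _]; apply crossing_lt; exact H|].
    assert (Hcand : tier_cand f Rp A q0).
    { split; [exact Hc0|]. split; [exact Ha0|]. intros k Hk.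
      destruct (Z.lt_ge_cases (alpha f k q0) 0) as [Hl|Hl]; [|lia].
      destruct (cand_lemma f k q0 Hv (Hpat k Hk) Hc0 Hl) as [r [R1 [R2 R3]]].
      destruct (classic (A r)) as [Ar|Ar].
      - pose proof (Hneg r k Ar Hk). lia.
      - pose proof (Hmax r (conj R2 Ar)). lia. }
    destruct (classic (exists k, flood_remove f Rp A k)) as [Hk|Hk].
    + assert (Inv' : Inv f (flood_remove f Rp A) (flood_assign f Rp A)).
      { split.
        - intros k [Hk1 _]; auto.
        - intros q k Hq [Hk1 Hk2]. destruct Hq as [Hq|Hq]; [apply Hneg; auto|].
          destruct (Z.le_gt_cases (alpha f k q) 0); auto.
          exfalso; apply Hk2; exists q; split; auto; lia. }
      apply flood_next; [eauto | exact Hk |].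
      assert (Hin : In q0 L) by (apply Hcov; auto).
      pose proof (remove_length_lt Nat.eq_dec L q0 Hin).
      apply IHn with (L := remove Nat.eq_dec q0 L); [lia| | exact Inv' |].
      * intros q Hc Hna. unfold flood_assign in Hna. apply in_in_remove.
        -- intro; subst; apply Hna; right; exact Hcand.
        -- apply Hcov; auto.
      * destruct Hk as [k Hk]. destruct (patch_has_pos f k Hv (Hpat k (proj1 Hk))) as [r [R1 R2]].
        exists r; split; auto. intro Har. pose proof (proj2 Inv' r k Har Hk). lia.
    + apply flood_last; [eauto|]. intros k Hk'; apply Hk; eauto.
Qed.

Lemma rc_exists : forall f n, valid_from n f -> forall s, s <= length f ->
  0 < fold_left step_count (firstn s f) n -> exists t i, nth_error f t = Some (RCusp i).
Proof.
  induction f as [|e f IH]; intros n Hv s Hs Hpos.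
  - simpl in Hv. subst. destruct s; simpl in *; lia.
  - destruct Hv as [Hok Hv']. destruct e as [i|i|i].
    3: { exists 0, i; reflexivity. }
    all: destruct s as [|s]; simpl in Hpos, Hs.
    all: first [ destruct (IH _ Hv' 0 ltac:(lia) ltac:(simpl; lia)) as [t [j Ht]]
               | destruct (IH _ Hv' s ltac:(lia) Hpos) as [t [j Ht]] ];
         exists (S t), j; exact Ht.
Qed.

Theorem mainTheorem7 (f : front) :
  knot_front f -> flooding_succeeds f.
Proof.
  intros [Hv [[a [Ha1 Ha2]] _]]. unfold flooding_succeeds.
  apply (main_ind f Hv (length f) (seq 0 (length f))).
  - rewrite length_seq; lia.
  - intros q Hq _. apply in_seq. pose proof (crossing_lt f q Hq). lia.
  - split; [auto | intros q k []].
  - destruct (rc_exists f 0 Hv (fst a) Ha1 ltac:(unfold nstr in Ha2; lia)) as [t [i Ht]].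
    exists t. split; [exists i; right; exact Ht | auto].
Qed.
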